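(* Let $n\ge2r\ge4$. If $k>n-r$, then there is no graph $H$ with $\mathsf{TJ}_k(H)\cong J(n,r)$; that is, $k\notin\mathcal{K}^{\mathsf{TJ}}(J(n,r))$.
   Context: All graphs are finite, simple, undirected. A $k$-clique of a graph $H$ is a set of $k$ pairwise adjacent vertices. For a graph $H$ and integer $k\ge1$, the Token Jumping graph $\mathsf{TJ}_k(H)$ has as vertices the $k$-cliques of $H$, and two $k$-cliques $A,B$ are adjacent iff $|A\cap B|=k-1$. $\mathcal{K}^{\mathsf{TJ}}(G)=\{k\ge1:\ \exists H,\ \mathsf{TJ}_k(H)\cong G\}$. The Johnson graph $J(n,r)$ has as vertices the $r$-subsets of $\{1,\dots,n\}$, two being adjacent iff their intersection has size $r-1$. *)

(* Defs.v *)
From mathcomp Require Import all_boot.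
Set Implicit Arguments. Unset Strict Implicit. Unset Printing Implicit Defensive.

Definition simple_graph (V : finType) (e : rel V) : Prop :=
  symmetric e /\ irreflexive e.

Definition is_kclique (V : finType) (e : rel V) (k : nat) (A : {set V}) : bool :=
  (#|A| == k) && [forall x in A, forall y in A, (x != y) ==> e x y].

Definition TJ_vertex (V : finType) (e : rel V) (k : nat) : finType :=
  {A : {set V} | is_kclique e k A}.

Definition TJ_adj (V : finType) (e : rel V) (k : nat) : rel (TJ_vertex e k) :=
  fun A B => #|val A :&: val B| == k.-1.

Definition J_vertex (n r : nat) : finType := {A : {set 'I_n} | #|A| == r}.

Definition J_adj (n r : nat) : rel (J_vertex n r) :=
  fun A B => #|val A :&: val B| == r.-1.

Definition graph_iso (T1 T2 : finType) (e1 : rel T1) (e2 : rel T2) : Prop :=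
  exists f : T1 -> T2, bijective f /\ forall x y, e1 x y = e2 (f x) (f y).

(* Main.v *)
Require Import Defs.
From mathcomp Require Import all_boot zify.
Set Implicit Arguments. Unset Strict Implicit. Unset Printing Implicit Defensive.

Lemma clq_card (V : finType) (e : rel V) k (A : {set V}) : is_kclique e k A -> #|A| = k.
Proof. by case/andP => /eqP. Qed.

Lemma clq_edge (V : finType) (e : rel V) k (A : {set V}) x y :
  is_kclique e k A -> x \in A -> y \in A -> x != y -> e x y.
Proof.
case/andP => _ /forall_inP h xA yA nxy.
by have /forall_inP h2 := h x xA; have := h2 y yA; rewrite nxy.
Qed.

Lemma mk_clq (V : finType) (e : rel V) k (A : {set V}) :
  #|A| = k -> (forall x y, x \in A -> y \in A -> x != y -> e x y) ->
  is_kclique e k A.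
Proof.
move=> cA h; apply/andP; split; first by apply/eqP.
apply/forall_inP => x xA; apply/forall_inP => y yA; apply/implyP; exact: h.
Qed.

Lemma tj_core (V : finType) (e : rel V) k (A B C : {set V}) :
  0 < k -> (forall K, ~~ is_kclique e k.+1 K) ->
  is_kclique e k A -> is_kclique e k B -> is_kclique e k C ->
  #|A :&: B| = k.-1 -> #|A :&: C| = k.-1 -> #|B :&: C| = k.-1 ->
  A :&: B \subset C.
Proof.
move=> k0 noK cA cB cC hAB hAC hBC.
apply/subsetP => x; rewrite inE => /andP [xA xB]; apply: contraT => xC.
have sub : forall X, is_kclique e k X -> x \in X -> #|X :&: C| = k.-1 ->
    X :\ x \subset C.
  move=> X cX xX hXC.
  have : X :&: C == X :\ x.
    rewrite eqEcard; apply/andP; split.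
      apply/subsetP => y; rewrite !inE => /andP [yX yC]; rewrite yX andbT.
      by apply: contraNneq xC => <-.
    by have := cardsD1 x X; rewrite xX (clq_card cX) hXC; lia.
  by move/eqP <-; exact: subsetIr.
have sA := sub A cA xA hAC.
have sB := sub B cB xB hBC.
case/negP: (noK (A :|: B)).
apply: mk_clq.
  by rewrite cardsU hAB (clq_card cA) (clq_card cB); lia.
have inC : forall w, w \in A :|: B -> w != x -> w \in C.
  move=> w; rewrite inE => /orP [wA|wB] nw.
    by apply: (subsetP sA); rewrite !inE wA nw.
  by apply: (subsetP sB); rewrite !inE wB nw.
move=> u v uAB vAB nuv.
case: (eqVneq u x) => [eu|nux].
  move: vAB; rewrite inE => /orP [vA|vB].
    by apply: (clq_edge cA) => //; rewrite eu.
  by apply: (clq_edge cB) => //; rewrite eu.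
case: (eqVneq v x) => [ev|nvx].
  move: uAB; rewrite inE => /orP [uA|uB].
    by apply: (clq_edge cA) => //; rewrite ev.
  by apply: (clq_edge cB) => //; rewrite ev.
by apply: (clq_edge cC) => //; apply: inC.
Qed.

Lemma sing_bound (U T : finType) (Q : {set U}) (h : U -> {set T}) (X : {set T}) :
  {in Q &, injective h} ->
  (forall C, C \in Q -> exists2 u, u \in X & h C = [set u]) -> #|Q| <= #|X|.
Proof.
move=> hi hs; rewrite -(card_in_imset hi).
have -> : #|X| = #|[set [set u] | u in X]|.
  by rewrite card_imset //; exact: set1_inj.
apply: subset_leq_card; apply/subsetP=> _ /imsetP [C CQ ->].
by have [u uX ->] := hs C CQ; apply/imsetP; exists u.
Qed.

Lemma claim1 (T : finType) (r : nat) (P1 P2 C : {set T}) :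
  #|C| = r -> #|C :&: P1| = r.-1 -> #|C :&: P2| = r.-1 -> #|P1 :&: P2| = r.-1 ->
  ~~ (P1 :&: P2 \subset C) -> C \subset P1 :|: P2.
Proof.
move=> cC c1 c2 cS nS.
have lt : #|C :&: (P1 :&: P2)| < r.-1.
  rewrite -cS; apply: proper_card; rewrite properE subsetIr /=.
  apply: contra nS => H; apply: subset_trans H (subsetIl _ _).
have e : C :&: (P1 :|: P2) = (C :&: P1) :|: (C :&: P2) by rewrite setIUr.
have e2 : (C :&: P1) :&: (C :&: P2) = C :&: (P1 :&: P2).
  by apply/setP=> i; rewrite !inE; case: (i \in C); case: (i \in P1).
have cU : #|C :&: (P1 :|: P2)| = r.
  apply/eqP; rewrite eqn_leq; apply/andP; split.
    by rewrite -cC; apply: subset_leq_card; exact: subsetIl.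
  by rewrite e cardsU e2 c1 c2; lia.
apply/setIidPl/eqP; rewrite eqEcard subsetIl /= cC cU //.
Qed.

Lemma mixed (T : finType) (r : nat) (S U C D : {set T}) :
  #|D| = r -> #|S| = r.-1 -> S \subset U -> C \subset U -> ~~ (S \subset C) -> S \subset D ->
  ~~ (D \subset U) -> #|C :&: D| < r.-1.
Proof.
move=> cD cS SU CU nSC SD nDU.
have DU : D :&: U = S.
  apply/eqP; rewrite eq_sym eqEcard subsetI SD SU /= cS.
  have : #|D :&: U| < #|D|.
    apply: proper_card; rewrite properE subsetIl /=.
    apply: contra nDU => H; exact: subset_trans H (subsetIr _ _).
  by rewrite cD; lia.
have -> : C :&: D = C :&: S.
  by rewrite -DU -{1}(setIidPl CU) -setIA [U :&: D]setIC.
rewrite -cS; apply: proper_card; rewrite properE subsetIr /=.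
apply: contra nSC => H; apply: subset_trans H (subsetIl _ _).
Qed.

Lemma clique_bound (T : finType) (r : nat) (Q : {set {set T}}) :
  2 <= r -> (forall C, C \in Q -> #|C| = r) ->
  (forall C D, C \in Q -> D \in Q -> C != D -> #|C :&: D| = r.-1) ->
  #|Q| <= maxn r.+1 (#|T| - r.-1).
Proof.
move=> r2 hc hp.
case: (leqP #|Q| 1) => [|Q2]; first by lia.
have [P1 [P2 [P1Q P2Q ne12]]] : exists P1 P2, [/\ P1 \in Q, P2 \in Q & P1 != P2].
  have [P1 P1Q] : exists P1, P1 \in Q.
    by apply/set0Pn; rewrite -card_gt0; lia.
  have : 0 < #|Q :\ P1| by move: Q2; rewrite (cardsD1 P1) P1Q; lia.
  rewrite card_gt0 => /set0Pn [P2]; rewrite !inE => /andP [ne P2Q].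
  by exists P1, P2; split; rewrite // eq_sym.
set S := P1 :&: P2; set U := P1 :|: P2.
have cS : #|S| = r.-1 by apply: hp.
have SU : S \subset U.
  by apply: subset_trans (subsetIl _ _) (subsetUl _ _).
have cl : forall C, C \in Q -> ~~ (S \subset C) -> C \subset U.
  move=> C CQ nS.
  have nC1 : C != P1 by apply: contra nS => /eqP ->; exact: subsetIl.
  have nC2 : C != P2 by apply: contra nS => /eqP ->; exact: subsetIr.
  by apply: claim1 (hc C CQ) (hp _ _ CQ P1Q nC1) (hp _ _ CQ P2Q nC2) cS nS.
have cU : #|U| = r.+1.
  rewrite /U cardsU cS (hc _ P1Q) (hc _ P2Q); lia.
case: (boolP [exists D in Q, ~~ (D \subset U)]).
- move=> /exists_inP [D DQ nDU].
  have SD : S \subset D by apply: contraR nDU => H; exact: cl.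
  have allS : forall C, C \in Q -> S \subset C.
    move=> C CQ; apply: contraT => nSC.
    have CU := cl C CQ nSC.
    have nCD : C != D by apply: contra nDU => /eqP <-.
    have := mixed (hc D DQ) cS SU CU nSC SD nDU.
    by rewrite (hp _ _ CQ DQ nCD) ltnn.
  have : #|Q| <= #|~: S|.
    apply: (@sing_bound _ _ Q (fun C => C :\: S)).
      move=> C1 C2 C1Q C2Q /= eq.
      rewrite -(setID C1 S) -(setID C2 S) eq (setIidPr (allS _ C1Q)).
      by rewrite (setIidPr (allS _ C2Q)).
    move=> C CQ.
    have : #|C :\: S| == 1.
      by rewrite cardsD (setIidPr (allS _ CQ)) (hc _ CQ) cS; apply/eqP; lia.
    move/cards1P=> [u eu]; exists u => //.
    have : u \in C :\: S by rewrite eu set11.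
    by rewrite !inE => /andP [].
  have := cardsC S; rewrite cS; lia.
- rewrite negb_exists_in => /forall_inP allU.
  have allU' : forall C, C \in Q -> C \subset U.
    by move=> C CQ; have := allU C CQ; rewrite negbK.
  have : #|Q| <= #|U|.
    apply: (@sing_bound _ _ Q (fun C => U :\: C)).
      move=> C1 C2 C1Q C2Q /= eq.
      have h1 : U :\: (U :\: C1) = C1.
        by rewrite setDDr setDv set0U; apply/setIidPr/allU'.
      have h2 : U :\: (U :\: C2) = C2.
        by rewrite setDDr setDv set0U; apply/setIidPr/allU'.
      by rewrite -h1 -h2 eq.
    move=> C CQ.
    have : #|U :\: C| == 1.
      by rewrite cardsD (setIidPr (allU' _ CQ)) (hc _ CQ) cU; apply/eqP; lia.
    move/cards1P=> [u eu]; exists u => //.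
    have : u \in U :\: C by rewrite eu set11.
    by rewrite !inE => /andP [].
  rewrite cU; lia.
Qed.

Lemma card_lt (n m : nat) : m <= n -> #|[set i : 'I_n | i < m]| = m.
Proof.
move=> le.
have -> : [set i : 'I_n | i < m] = [set widen_ord le j | j in 'I_m].
  apply/setP => i; rewrite inE; apply/idP/imsetP.
    by move=> lt; exists (Ordinal lt) => //; apply: val_inj.
  by case=> j _ ->; rewrite /= ltn_ord.
rewrite card_imset ?card_ord //.
by move=> a b /(congr1 val) /= /val_inj.
Qed.

Lemma noK_lemma (n r k : nat) (V : finType) (e : rel V) (f : TJ_vertex e k -> J_vertex n r) :
  2 <= r -> 2 * r <= n -> n - r < k -> injective f ->
  (forall x y, TJ_adj x y = J_adj (f x) (f y)) ->
  forall K, ~~ is_kclique e k.+1 K.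
Proof.
move=> r2 le lt fi hf K; apply/negP => cK.
have cK' := clq_card cK.
have [x0 x0K] : exists x0, x0 \in K by apply/set0Pn; rewrite -card_gt0 cK'.
have sc : forall x, x \in K -> is_kclique e k (K :\ x).
  move=> x xK; apply: mk_clq.
    by have := cardsD1 x K; rewrite xK cK'; lia.
  move=> u v; rewrite !inE => /andP [_ uK] /andP [_ vK]; exact: (clq_edge cK).
pose v0 : TJ_vertex e k := exist _ (K :\ x0) (sc x0 x0K).
pose vx x : TJ_vertex e k := insubd v0 (K :\ x).
have vxE : forall x, x \in K -> val (vx x) = K :\ x.
  by move=> x xK; rewrite /vx insubdK //; apply: (sc x xK).
pose Q := [set val (f (vx x)) | x in K].
have injK : {in K &, injective (fun x => val (f (vx x)))}.
  move=> x y xK yK /= /val_inj /fi /(congr1 val); rewrite !vxE // => eq.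
  apply/eqP; apply: contraT => nxy; have : x \in K :\ y by rewrite !inE nxy xK.
  by rewrite -eq !inE eqxx.
have cQ : #|Q| = k.+1 by rewrite card_in_imset // cK'.
have := clique_bound (T := 'I_n) (r := r) (Q := Q) r2.
rewrite card_ord cQ => H.
suff : k.+1 <= maxn r.+1 (n - r.-1) by lia.
apply: H.
  by move=> C /imsetP [x _ ->]; apply/eqP; exact: (valP (f (vx x))).
move=> C D /imsetP [x xK ->] /imsetP [y yK ->] nCD.
have nxy : x != y by apply: contraNneq nCD => ->.
apply/eqP; rewrite -/(J_adj (f (vx x)) (f (vx y))) -hf /TJ_adj !vxE //.
have -> : (K :\ x) :&: (K :\ y) = (K :\ x) :\ y.
  by apply/setP => z; rewrite !inE; case: (z \in K); rewrite ?andbF ?andbT // andbC.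
have := cardsD1 y (K :\ x); have := cardsD1 x K.
by rewrite !inE eq_sym nxy yK xK cK'; lia.
Qed.


Theorem theorem4p22 (n r k : nat) :
  4 <= 2 * r -> 2 * r <= n -> n - r < k ->
  forall (V : finType) (e : rel V), simple_graph e ->
    ~ graph_iso (@TJ_adj V e k) (@J_adj n r).
Proof.
move=> r2' le lt V e _ [f [[g fg gf] hf]].
have r2 : 2 <= r by lia.
have fi : injective f := can_inj fg.
have noK := noK_lemma r2 le lt fi hf.
have k0 : 0 < k by lia.
pose S := [set i : 'I_n | i < r.-1].
have cS : #|S| = r.-1 by apply: card_lt; lia.
have h0 : 0 < n by lia.
have h1 : r.-1 < n by lia.
have h2 : r < n by lia.
have h3 : r.+1 < n by lia.
pose ox := Ordinal h0; pose oa := Ordinal h1; pose ob := Ordinal h2; pose oz := Ordinal h3.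
pose A := oa |: S; pose B := ob |: S; pose C := oz |: S; pose D := oa |: (ob |: (S :\ ox)).
have mem : forall (X : {set 'I_n}) (P : pred nat), (forall i, (i \in X) = P (val i)) ->
   forall i, (i \in X) = P (val i) by [].
have inS : forall i : 'I_n, (i \in S) = (val i < r.-1) by move=> i; rewrite inE.
have inA : forall i : 'I_n, (i \in A) = (val i < r) by move=> i; rewrite !inE -val_eqE /=; lia.
have inB : forall i : 'I_n, (i \in B) = ((val i < r.-1) || (val i == r)) by move=> i; rewrite !inE -val_eqE /=; lia.
have inC : forall i : 'I_n, (i \in C) = ((val i < r.-1) || (val i == r.+1)) by move=> i; rewrite !inE -val_eqE /=; lia.
have inD : forall i : 'I_n, (i \in D) = ((0 < val i) && (val i <= r)) by move=> i; rewrite !inE -!val_eqE /=; lia.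
pose E := S :\ ox.
have inE' : forall i : 'I_n, (i \in E) = ((0 < val i) && (val i < r.-1)) by move=> i; rewrite !inE -val_eqE /=; lia.
have cE : #|E| = r.-2.
  have h : 0 < r.-1 by lia.
  have := cardsD1 ox S; rewrite inS /= h cS -/E /=. lia.
have cA : #|A| == r.
  have -> : A = [set i : 'I_n | i < r] by apply/setP => i; rewrite inA inE.
  by rewrite card_lt //; lia.
have cB : #|B| == r by rewrite cardsU1 inS cS /=; lia.
have cC : #|C| == r by rewrite cardsU1 inS cS /=; lia.
have cD : #|D| == r.
  by rewrite cardsU1 cardsU1 -/E cE !inE' !inE -!val_eqE /=; lia.
pose Ja : J_vertex n r := exist _ A cA.
pose Jb : J_vertex n r := exist _ B cB.
pose Jc : J_vertex n r := exist _ C cC.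
pose Jd : J_vertex n r := exist _ D cD.
have eAB : A :&: B = S by apply/setP => i; rewrite in_setI inA inB inS; lia.
have eAC : A :&: C = S by apply/setP => i; rewrite in_setI inA inC inS; lia.
have eBC : B :&: C = S by apply/setP => i; rewrite in_setI inB inC inS; lia.
have eAD : A :&: D = oa |: E by apply/setP => i; rewrite in_setI inA inD in_setU1 inE' -val_eqE /=; lia.
have eBD : B :&: D = ob |: E by apply/setP => i; rewrite in_setI inB inD in_setU1 inE' -val_eqE /=; lia.
have eCD : C :&: D = E by apply/setP => i; rewrite in_setI inC inD inE'; lia.
have adj : forall X Y, J_adj X Y -> TJ_adj (g X) (g Y) by move=> X Y; rewrite hf !gf.
have jab : J_adj Ja Jb by rewrite /J_adj /= eAB cS.
have jac : J_adj Ja Jc by rewrite /J_adj /= eAC cS.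
have jbc : J_adj Jb Jc by rewrite /J_adj /= eBC cS.
have jad : J_adj Ja Jd by rewrite /J_adj /= eAD cardsU1 inE' cE /=; lia.
have jbd : J_adj Jb Jd by rewrite /J_adj /= eBD cardsU1 inE' cE /=; lia.
have njcd : ~~ J_adj Jc Jd by rewrite /J_adj /= eCD cE; lia.
have tk : forall X Y, J_adj X Y -> #|val (g X) :&: val (g Y)| = k.-1.
  by move=> X Y /adj /eqP.
have core := fun X Y Z (hXY : J_adj X Y) (hXZ : J_adj X Z) (hYZ : J_adj Y Z) =>
  tj_core k0 noK (valP (g X)) (valP (g Y)) (valP (g Z)) (tk _ _ hXY) (tk _ _ hXZ) (tk _ _ hYZ).
have sc := core _ _ _ jab jac jbc.
have sd := core _ _ _ jab jad jbd.
set a := val (g Ja) in sc sd; set b := val (g Jb) in sc sd.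
set c := val (g Jc) in sc sd; set d := val (g Jd) in sc sd.
have ncd : c != d.
  apply/eqP => /val_inj /(congr1 f); rewrite !gf => /(congr1 val) /= /setP /(_ oz).
  by rewrite inC inD /=; lia.
have cc : #|c| = k by apply: clq_card (valP (g Jc)).
have cd : #|d| = k by apply: clq_card (valP (g Jd)).
have cab : #|a :&: b| = k.-1 by apply: tk.
have : TJ_adj (g Jc) (g Jd).
  rewrite /TJ_adj -/c -/d; apply/eqP/anti_leq/andP; split.
    have : #|c :&: d| < #|c|.
      apply: proper_card; rewrite properE subsetIl /=; apply: contra ncd => H.
      by rewrite eqEcard (subset_trans H (subsetIr c d)) cc cd leqnn.
    rewrite cc; lia.
  by rewrite -cab; apply: subset_leq_card; rewrite subsetI sc sd.
by rewrite hf !gf (negbTE njcd).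
Qed.
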